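(* For all integers $s\ge3$ and $k\ge2$ there are infinitely many pairwise non-isomorphic connected graphs $G\in\mathcal G^s_1$ with $v(G)\neq k$ such that $\tau_k(G)=\dfrac{v(G)-k}{sk-k+1}$.
   Context: All graphs are finite and simple. For integers $1\le r\le s$, $\mathcal G^s_r$ denotes the set of graphs in which every vertex has degree at least $r$ and at most $s$. $v(G)$ is the number of vertices of $G$. For an integer $k\ge1$, $\tau_k(G)$ denotes the maximum number of pairwise vertex-disjoint subgraphs of $G$ each of which is a tree with exactly $k$ edges. *)

(* Defs.v *)
From mathcomp Require Import all_boot all_order all_algebra.
Set Implicit Arguments. Unset Strict Implicit. Unset Printing Implicit Defensive.

Record sgraph := SGraph {
  vn : nat;
  adj : rel 'I_vn;
  adj_sym : symmetric adj;
  adj_irr : irreflexive adj }.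
Arguments adj : clear implicits.

Definition deg (G : sgraph) (x : 'I_(vn G)) : nat := #|[set y | adj G x y]|.

Definition in_class (r s : nat) (G : sgraph) : Prop :=
  forall x : 'I_(vn G), r <= deg x <= s.

Definition connectedG (G : sgraph) : Prop :=
  forall x y : 'I_(vn G), connect (adj G) x y.

Definition isomorphic (G H : sgraph) : Prop :=
  exists f : 'I_(vn G) -> 'I_(vn H),
    bijective f /\ forall x y, adj H (f x) (f y) = adj G x y.

Definition nedges (n : nat) (E : rel 'I_n) : nat :=
  #|[set p : 'I_n * 'I_n | E p.1 p.2 && (p.1 < p.2)]|.

Definition del_edge (n : nat) (E : rel 'I_n) (a b : 'I_n) : rel 'I_n :=
  fun x y => E x y && ~~ (((x == a) && (y == b)) || ((x == b) && (y == a))).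

(* (S, E) is a subgraph of G that is a tree (connected and acyclic, where
   acyclic = every edge is a bridge) with exactly k edges. *)
Definition tree_subgraph (G : sgraph) (k : nat)
    (S : {set 'I_(vn G)}) (E : rel 'I_(vn G)) : Prop :=
  (symmetric E /\
   (forall x y, E x y -> [&& adj G x y, x \in S & y \in S])) /\
  [/\ S != set0,
      (forall x y, x \in S -> y \in S -> connect E x y),
      (forall a b, E a b -> ~~ connect (del_edge E a b) a b)
    & nedges E = k].
Arguments tree_subgraph : clear implicits.

Definition has_tree_packing (G : sgraph) (k t : nat) : Prop :=
  exists (S : 'I_t -> {set 'I_(vn G)}) (E : 'I_t -> rel 'I_(vn G)),
    (forall i, tree_subgraph G k (S i) (E i)) /\
    (forall i j, i != j -> [disjoint S i & S j]).

Definition is_tau (G : sgraph) (k t : nat) : Prop :=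
  has_tree_packing G k t /\ (forall t', has_tree_packing G k t' -> t' <= t).

(* Main.v *)
Require Import Defs.
From mathcomp Require Import all_boot all_order all_algebra zify.

Section PathTree.
Variables (G : sgraph) (k : nat) (p : nat -> 'I_(vn G)).
Hypothesis pinc : forall i, i < k -> val (p i) < val (p i.+1).
Hypothesis padj : forall i, i < k -> adj G (p i) (p i.+1).

Definition PS : {set 'I_(vn G)} := [set p (val i) | i : 'I_k.+1].
Definition PE : rel 'I_(vn G) := fun x y =>
  [exists i : 'I_k, ((x == p i) && (y == p i.+1)) || ((x == p i.+1) && (y == p i))].

Lemma pmono j i : i < j -> j <= k -> val (p i) < val (p j).
Proof.
elim: j i => // j IH i lt_ij lejk.
rewrite ltnS leq_eqVlt in lt_ij; case/orP: lt_ij => [/eqP-> | lt_ij].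
  exact: pinc.
exact: ltn_trans (IH _ lt_ij (ltnW lejk)) (pinc _ lejk).
Qed.

Lemma pinj i j : i <= k -> j <= k -> p i = p j -> i = j.
Proof.
move=> ik jk e; case: (ltngtP i j) => // h.
  by have := pmono _ _ h jk; rewrite e ltnn.
by have := pmono _ _ h ik; rewrite e ltnn.
Qed.

Lemma inPS x : (x \in PS) = [exists i : 'I_k.+1, x == p i].
Proof.
apply/imsetP/existsP => [[i _ ->]|[i /eqP ->]]; exists i => //.
Qed.

Lemma PE_sym : symmetric PE.
Proof.
move=> x y; apply/existsP/existsP => -[i h]; exists i; by case/orP: h => /andP[-> ->]; rewrite ?orbT.
Qed.

Lemma PEP x y : reflect (exists2 i, i < k & (x = p i /\ y = p i.+1) \/ (x = p i.+1 /\ y = p i)) (PE x y).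
Proof.
apply: (iffP existsP) => [[i /orP[/andP[/eqP-> /eqP->]|/andP[/eqP-> /eqP->]]]|[i ik [[-> ->]|[-> ->]]]].
- by exists i; [exact: ltn_ord | left].
- by exists i; [exact: ltn_ord | right].
- by exists (Ordinal ik); rewrite /= !eqxx.
- by exists (Ordinal ik); rewrite /= !eqxx orbT.
Qed.

Lemma pinPS i : i <= k -> p i \in PS.
Proof. by move=> ik; rewrite inPS; apply/existsP; exists (Ordinal (ik : i < k.+1)). Qed.

Lemma conn0 i : i <= k -> connect PE (p 0) (p i).
Proof.
elim: i => // i IH ik.
apply: connect_trans (IH (ltnW ik)) (connect1 _).
by apply/PEP; exists i => //; left.
Qed.

Lemma path_tree : tree_subgraph G k PS PE.
Proof.
split; first split.
- exact: PE_sym.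
- move=> x y /PEP[i ik [[-> ->]|[-> ->]]].
  + by rewrite padj // !pinPS // ltnW.
  + by rewrite adj_sym padj // !pinPS // ltnW.
split.
- by apply/set0Pn; exists (p 0); apply: pinPS.
- move=> x y; rewrite !inPS => /existsP[i /eqP->] /existsP[j /eqP->].
  apply: (@connect_trans _ _ (p 0)); last by rewrite conn0 // -ltnS.
  by rewrite (sym_connect_sym PE_sym) conn0 // -ltnS.
- move=> a b /PEP[i ik Hab].
  pose A := [pred x | [exists j : 'I_k.+1, (j <= i) && (x == p j)]].
  have inA j : j <= k -> (p j \in A) = (j <= i).
    move=> jk; apply/existsP/idP => [[j' /andP[h /eqP e]]|h].
      by rewrite (pinj _ _ jk _ e) // -ltnS.
    by exists (Ordinal (jk : j < k.+1)); rewrite h eqxx.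
  have clA : closed (del_edge PE a b) A.
    move=> x y /andP[/PEP[j jk Hxy] nab].
    have jk' : j <= k by apply: ltnW.
    case: (ltngtP j i) => [lji|lij|eji].
    - by case: Hxy nab => [[-> ->]|[-> ->]]; rewrite !inA // => _; apply/idP/idP => _; lia.
    - by case: Hxy nab => [[-> ->]|[-> ->]]; rewrite !inA // => _; apply/idP/idP => ?; lia.
    - subst j; case: Hxy nab => [[-> ->]|[-> ->]]; case: Hab => [[-> ->]|[-> ->]]; by rewrite !eqxx ?orbT.
  apply/negP => /(closed_connect clA).
  case: Hab => [[-> ->]|[-> ->]]; rewrite !inA ?leqnn ?ltnn // ltnW //.
- rewrite /nedges.
  have -> : [set q : 'I_(vn G) * 'I_(vn G) | PE q.1 q.2 && (q.1 < q.2)]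
           = [set (p i, p i.+1) | i : 'I_k].
    apply/setP => -[x y]; rewrite inE /=; apply/andP/imsetP.
    - case=> /PEP[i ik [[-> ->]|[-> ->]]] lt; first by exists (Ordinal ik).
      by have := pinc _ ik; rewrite ltnNge ltnW.
    - case=> i _ [-> ->]; split; last exact: pinc.
      by apply/PEP; exists i => //; left.
  rewrite card_imset ?card_ord // => i j [e _].
  by apply: val_inj; apply: pinj e; apply: ltnW.
Qed.
End PathTree.
Definition attach (s k t c y : nat) : bool :=
  ((y - t) %% k == 0) && (c * (s-1) <= (y-t) %/ k) && ((y-t) %/ k <= c*(s-1) + (s-1)).

Definition adjn (s k t x y : nat) : bool :=
  [|| [&& t <= x, t <= y, (x-t) %/ k == (y-t) %/ k & (x.+1 == y) || (y.+1 == x)],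
      [&& x < t, t <= y & attach s k t x y] |
      [&& y < t, t <= x & attach s k t y x]].

Lemma adjn_sym s k t x y : adjn s k t x y = adjn s k t y x.
Proof.
rewrite /adjn; apply/idP/idP => /or3P[/and4P[h1 h2 /eqP h3 h4]|/and3P[h1 h2 h3]|/and3P[h1 h2 h3]];
  apply/or3P.
- by constructor 1; rewrite h1 h2 h3 eqxx orbC.
- by constructor 3; rewrite h1 h2 h3.
- by constructor 2; rewrite h1 h2 h3.
- by constructor 1; rewrite h1 h2 h3 eqxx orbC.
- by constructor 3; rewrite h1 h2 h3.
- by constructor 2; rewrite h1 h2 h3.
Qed.

Lemma adjn_irr s k t x : adjn s k t x x = false.
Proof.
apply/negbTE/negP; rewrite /adjn => /or3P[/and4P[_ _ _ /orP[]]|/and3P[h1 h2 _]|/and3P[h1 h2 _]];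
  try (move/eqP; lia); lia.
Qed.

Definition N (s k t : nat) := t + k * (t * (s-1)).+1.

Definition Gr (s k t : nat) : sgraph :=
  @SGraph (N s k t) (fun x y => adjn s k t x y)
    (fun x y => adjn_sym s k t x y) (fun x => adjn_irr s k t x).

Lemma deg_le (G : sgraph) x m (g : nat -> nat) :
  (forall y, adj G x y -> exists2 i, i < m & (y : nat) = g i) -> deg x <= m.
Proof.
move=> H; rewrite /deg.
have sub : [set y | adj G x y] \subset [set insubd x (g (val i)) | i : 'I_m].
  apply/subsetP => y; rewrite inE => /H [i im e].
  apply/imsetP; exists (Ordinal im) => //; apply: val_inj.
  by rewrite /= val_insubd -e ltn_ord.
by apply: leq_trans (subset_leq_card sub) _; rewrite (leq_trans (leq_imset_card _ _)) ?card_ord.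
Qed.

Lemma deg_ge1 (G : sgraph) x y : adj G x y -> 0 < deg x.
Proof. by move=> h; apply/card_gt0P; exists y; rewrite inE. Qed.
Lemma adjnE s k t x y : adjn s k t x y <->
  (t <= x /\ t <= y /\ (x-t) %/ k = (y-t) %/ k /\ (x.+1 = y \/ y.+1 = x)) \/
  (x < t /\ t <= y /\ (y-t) %% k = 0 /\ x * (s-1) <= (y-t) %/ k /\ (y-t) %/ k <= x*(s-1) + (s-1)) \/
  (y < t /\ t <= x /\ (x-t) %% k = 0 /\ y * (s-1) <= (x-t) %/ k /\ (x-t) %/ k <= y*(s-1) + (s-1)).
Proof.
rewrite /adjn /attach; split.
- case/or3P => [/and4P[h1 h2 /eqP h3 /orP[/eqP h4|/eqP h4]]|/and3P[h1 h2 /andP[/andP[/eqP h3 h4] h5]]|/and3P[h1 h2 /andP[/andP[/eqP h3 h4] h5]]].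
  + by left; do ! split => //; left.
  + by left; do ! split => //; right.
  + by right; left.
  + by right; right.
- case=> [[h1 [h2 [h3 [h4|h4]]]]|[[h1 [h2 [h3 [h4 h5]]]]|[h1 [h2 [h3 [h4 h5]]]]]]; apply/or3P.
  + by constructor 1; rewrite h1 h2 h3 h4 !eqxx.
  + by constructor 1; rewrite h1 h2 h3 h4 !eqxx orbT.
  + by constructor 2; rewrite h1 h2 h3 h4 h5 eqxx.
  + by constructor 3; rewrite h1 h2 h3 h4 h5 eqxx.
Qed.

Lemma aux1 x t q M k : 2 <= k -> t <= x -> x - t = q * k -> x < t + k * M.+1 -> x.+1 < t + k * M.+1.
Proof. intros. have: q < M.+1. rewrite -(ltn_pmul2r (_ : 0 < k)); lia. intros. nia. Qed.

Lemma aux2 t c s k : 0 < k -> c <= t -> t + c * (s-1) * k < t + k * (t * (s-1)).+1.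
Proof.
move=> kp ct; rewrite ltn_add2l [_ * k]mulnC.
apply: (@leq_ltn_trans (k * (t * (s-1)))); last by rewrite ltn_mul2l kp ltnSn.
by rewrite leq_mul2l leq_mul2r ct !orbT.
Qed.

Lemma aux3 t q k : 0 < k -> (t + q * k - t) %/ k = q /\ (t + q * k - t) %% k = 0.
Proof. by move=> kp; rewrite addnC addnK mulnK // modnMl. Qed.

Lemma vtxP n (x0 : 'I_n) v : v < n -> nat_of_ord (insubd x0 v) = v.
Proof. by move=> h; rewrite val_insubd h. Qed.

Lemma deg_le_Gr s k t (x : 'I_(N s k t)) m g :
  (forall y : 'I_(N s k t), adjn s k t x y -> exists2 i, i < m & (y : nat) = g i) ->
  deg (G := Gr s k t) x <= m.
Proof. move=> H; apply: (@deg_le (Gr s k t) x m g) => y; exact: H. Qed.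

Section G.
Variables s k t : nat.
Hypotheses (hs : 3 <= s) (hk : 2 <= k) (ht : 1 <= t).

Lemma deg_upper (x : 'I_(N s k t)) : deg (G := Gr s k t) x <= s.
Proof.
have xN : (x : nat) < t + k * (t * (s-1)).+1 := ltn_ord x.
case: (ltnP ((x : nat)) t) => xt.
  apply: (@deg_le_Gr s k t x s (fun i => t + ((x : nat) * (s-1) + i) * k)) => y /adjnE.
  have yN : (y : nat) < t + k * (t * (s-1)).+1 := ltn_ord y.
  case=> [[h1 _]|[[_ [h2 [h3 [h4 h5]]]]|[_ [h2 _]]]]; try (exfalso; lia).
  exists (((y : nat) - t) %/ k - (x : nat) * (s-1)).
    by move: h5; generalize (((y : nat) - t) %/ k) ((x : nat) * (s-1)) => a q; lia.
  have := divn_eq ((y : nat) - t) k; nia.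
apply: (@leq_trans 3); last by [].
pose b := ((x : nat) - t) %/ k.
apply: (@deg_le_Gr s k t x 3 (fun i => if i == 0 then ((x : nat)).+1 else if i == 1 then
   (if ((x : nat) - t) %% k == 0 then b %/ (s-1) else ((x : nat)).-1) else (b %/ (s-1)).-1)) => y /adjnE.
case=> [[_ [h2 [h3 [h4|h4]]]]|[[h1 _]|[h1 [_ [h3 [h4 h5]]]]]].
- by exists 0.
- exists 1 => //=.
  case: eqP => hm; last by lia.
  exfalso; have := divn_eq ((x : nat) - t) k; have := divn_eq ((y : nat) - t) k; nia.
- exfalso; lia.
- have : (y : nat) = b %/ (s-1) \/ (y : nat) = (b %/ (s-1)).-1 by rewrite /b; nia.
  case=> e; [exists 1 | exists 2] => //=; by rewrite ?h3 ?eqxx.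
Qed.

Lemma adjv (x0 : 'I_(N s k t)) a b : a < N s k t -> b < N s k t ->
  adjn s k t a b -> adj (Gr s k t) (insubd x0 a) (insubd x0 b).
Proof. by move=> ha hb h; rewrite /= !vtxP. Qed.

Lemma insubd_self (x : 'I_(N s k t)) : insubd x (x : nat) = x.
Proof. by apply: val_inj; rewrite /= vtxP. Qed.

Lemma deg_lower (x : 'I_(N s k t)) : 0 < deg (G := Gr s k t) x.
Proof.
have xN : (x : nat) < t + k * (t * (s-1)).+1 := ltn_ord x.
case: (ltnP (x : nat) t) => xt.
  apply: (@deg_ge1 (Gr s k t) x (insubd x (t + x * (s-1) * k))).
  rewrite -[X in adj _ X _]insubd_self; apply: adjv => //; first by rewrite /N ltn_add2l [_ * k]mulnC ltn_pmul2l ?ltnS ?leq_mul2r ?(ltnW xt) ?orbT //; lia.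
  apply/adjnE; right; left; split => //; split; first nia.
  have e : t + x * (s - 1) * k - t = (x * (s-1)) * k by rewrite addnC addnK.
  by rewrite e mulnK ?modnMl ?leqnn ?leq_addr; lia.
case: (boolP (((x : nat) - t) %% k == 0)) => /eqP hm.
  apply: (@deg_ge1 (Gr s k t) x (insubd x (x : nat).+1)).
  rewrite -[X in adj _ X _]insubd_self; apply: adjv => //.
    rewrite /N; apply: (@aux1 _ _ (((x : nat) - t) %/ k)) => //.
    by have := divn_eq ((x : nat) - t) k; rewrite hm addn0.
  apply/adjnE; left; split; first lia; split; first lia; split; last by left.
  by have := divn_eq ((x : nat) - t) k; have := divn_eq ((x : nat).+1 - t) k; nia.
apply: (@deg_ge1 (Gr s k t) x (insubd x (x : nat).-1)).
rewrite -[X in adj _ X _]insubd_self; apply: adjv => //; first exact: leq_ltn_trans (leq_pred _) xN.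
have x1 : t < x by case: ltngtP xt hm => // <-; rewrite subnn mod0n.
apply/adjnE; left; split; first lia; split; first lia; split; last by right; lia.
by have := divn_eq ((x : nat) - t) k; have := divn_eq ((x : nat).-1 - t) k; nia.
Qed.

Lemma ltN a : a < t -> a < N s k t.
Proof. by move=> h; apply: leq_trans h (leq_addr _ _). Qed.

Definition cn (x0 : 'I_(N s k t)) a b :=
  connect (adj (Gr s k t)) (insubd x0 a) (insubd x0 b).

Lemma cn_edge x0 a b : a < N s k t -> b < N s k t -> adjn s k t a b -> cn x0 a b.
Proof. by move=> ha hb h; apply: connect1; apply: adjv. Qed.

Lemma cn_trans x0 b a c : cn x0 a b -> cn x0 b c -> cn x0 a c.
Proof. exact: connect_trans. Qed.

Lemma cn_sym x0 a b : cn x0 a b -> cn x0 b a.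
Proof. by rewrite /cn (sym_connect_sym (@adj_sym (Gr s k t))). Qed.

Lemma cn_center x0 c : c < t -> cn x0 c 0.
Proof.
elim: c => [|c IH] ct; first exact: connect0.
have kp : 0 < k by lia.
have [d1 m1] := aux3 t (c.+1 * (s-1)) k kp.
have rN : t + c.+1 * (s-1) * k < N s k t by rewrite /N; apply: aux2 => //; lia.
apply: (@cn_trans x0 (t + c.+1 * (s-1) * k)).
  apply: cn_edge => //; first by apply: ltN.
  by apply/adjnE; right; left; rewrite d1 m1; do ! split => //; try lia; nia.
apply: cn_trans (IH (ltnW ct)).
apply: cn_edge => //; first by apply: ltN; lia.
by apply/adjnE; right; right; rewrite d1 m1; do ! split => //; try lia; nia.
Qed.

Lemma cn_block x0 a : t <= a -> a < N s k t -> cn x0 a (t + ((a - t) %/ k) * k).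
Proof.
have kp : 0 < k by lia.
move: {2}((a - t) %% k) (erefl ((a - t) %% k)) => i.
elim: i a => [|i IH] a ei ta aN.
  by have := divn_eq (a - t) k; rewrite ei addn0 => e; rewrite -e subnKC //; apply: connect0.
have a1 : t < a by case: ltngtP ta ei => // <-; rewrite subnn mod0n.
have e1 : (a.-1 - t) %/ k = (a - t) %/ k /\ (a.-1 - t) %% k = i.
  have ik : i < k by have := ltn_pmod (a - t) kp; rewrite ei; lia.
  have ea : a.-1 - t = (a-t) %/ k * k + i.
    by have := divn_eq (a-t) k; rewrite ei; generalize ((a - t) %/ k * k); lia.
  by rewrite ea divnMDl // modnMDl (divn_small ik) (modn_small ik) addn0.
case: e1 => e1 e2.
apply: (@cn_trans x0 (a.-1)).
  apply: cn_edge => //; first by exact: leq_ltn_trans (leq_pred _) aN.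
  apply/adjnE; left; split => //; split; first lia; split; first by rewrite e1.
  by right; lia.
by rewrite -e1; apply: IH => //; [lia | exact: leq_ltn_trans (leq_pred _) aN].
Qed.

Lemma cn_root x0 b : t + b * k < N s k t -> cn x0 (t + b * k) 0.
Proof.
have kp : 0 < k by lia.
move=> bN.
have bM : b <= t * (s-1).
  move: bN; rewrite /N ltn_add2l mulnC ltn_pmul2l //.
have [d1 m1] := aux3 t b k kp.
pose c := minn (b %/ (s-1)) t.-1.
have ct : c < t by rewrite /c; lia.
apply: (@cn_trans x0 c); last exact: cn_center.
apply: cn_edge => //; first by apply: ltN.
apply/adjnE; right; right; rewrite d1 m1; split => //; split; first lia; split => //.
rewrite /c; nia.
Qed.

Lemma cn_all x0 a : a < N s k t -> cn x0 a 0.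
Proof.
move=> aN; case: (ltnP a t) => ta; first exact: cn_center.
apply: (@cn_trans x0 _ _ _ (cn_block x0 a ta aN)); apply: cn_root.
apply: leq_ltn_trans aN; have := divn_eq (a - t) k; lia.
Qed.

Lemma Gr_connected : connectedG (Gr s k t).
Proof.
move=> x y.
have := cn_all x x (ltn_ord x); have := cn_all x y (ltn_ord y).
rewrite /cn !insubd_self => h1 h2.
have ey : insubd x (y : nat) = y by apply: val_inj; rewrite /= vtxP.
rewrite -ey; apply: connect_trans h2 _; by rewrite (sym_connect_sym (@adj_sym (Gr s k t))).
Qed.
End G.

Lemma insubd_val n (x0 y : 'I_n) : insubd x0 (y : nat) = y.
Proof. by apply: val_inj; rewrite /= vtxP. Qed.

Lemma aux4 c t s k i : c < t -> 1 <= s - 1 -> i < k ->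
  t + (c * (s-1)).+1 * k + i < t + k * (t * (s-1)).+1.
Proof.
move=> ct hs ik.
have h : (c * (s-1)).+2 <= (t * (s-1)).+1.
  have : c.+1 * (s-1) <= t * (s-1) by rewrite leq_mul2r ct orbT.
  rewrite mulSn; lia.
move: h; generalize (c * (s-1)) (t * (s-1)) => X Y h; nia.
Qed.

Lemma blk_eq t B k j : 0 < k -> j < k -> (t + B * k + j - t) %/ k = B.
Proof. by move=> kp jk; rewrite -addnA addnC addnK divnMDl // divn_small // addn0. Qed.

Section Pack.
Variables s k t : nat.
Hypotheses (hs : 3 <= s) (hk : 2 <= k) (ht : 1 <= t).

Definition x00 : 'I_(N s k t) := Ordinal (@ltN s k t 0 ht).

Definition pv (c i : nat) : nat := if i == 0 then c else t + (c * (s-1)).+1 * k + i.-1.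

Lemma pv_lt c i : c < t -> i <= k -> pv c i < N s k t.
Proof.
move=> ct ik; rewrite /pv; case: eqP => [_|i0]; first exact: ltN.
rewrite /N; apply: aux4 => //; lia.
Qed.

Definition pc (c : nat) (i : nat) : 'I_(N s k t) := insubd x00 (pv c i).

Lemma pc_tree c : c < t -> tree_subgraph (Gr s k t) k (PS (Gr s k t) k (pc c)) (PE (Gr s k t) k (pc c)).
Proof.
move=> ct; have kp : 0 < k by lia.
apply: path_tree => i ik; rewrite /pc.
  rewrite /= !vtxP ?pv_lt //; try lia.
  by rewrite /pv /=; case: eqP => i0; generalize ((c * (s-1)).+1 * k) => X; lia.
apply: (@adjv s k t x00 (pv c i) (pv c i.+1)); try (apply: pv_lt => //; lia).
rewrite /pv /=; case: eqP => [->|i0].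
  have [d1 m1] := aux3 t (c * (s-1)).+1 k kp.
  apply/adjnE; right; left; rewrite addn0 d1 m1.
  split => //; split; first exact: leq_addr.
  by split => //; generalize (c * (s-1)) => X; lia.
have e : forall j, j < k -> (t + (c * (s - 1)).+1 * k + j - t) %/ k = (c * (s-1)).+1.
  by move=> j jk; rewrite -addnA addnC addnK divnMDl // divn_small // addn0.
apply/adjnE; left; split; first by rewrite -addnA leq_addr.
split; first by rewrite -addnA leq_addr.
split; first by rewrite !e //; lia.
by left; generalize ((c * (s-1)).+1 * k) => X; lia.
Qed.

Lemma pv_eq c d i j : c < t -> d < t -> i <= k -> j <= k -> pv c i = pv d j -> c = d.
Proof.
move=> ct dt ik jk; rewrite /pv; have kp : 0 < k by lia.
case: eqP => i0; case: eqP => j0 //.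
- move=> e; exfalso; move: e; generalize ((d * (s-1)).+1 * k) => X; lia.
- move=> e; exfalso; move: e; generalize ((c * (s-1)).+1 * k) => X; lia.
move=> e.
have e2 : ((t + (c * (s-1)).+1 * k + i.-1) - t) %/ k = ((t + (d * (s-1)).+1 * k + j.-1) - t) %/ k by rewrite e.
rewrite !blk_eq // in e2; [ | lia | lia].
apply/eqP; rewrite -(eqn_pmul2r (_ : 0 < s - 1)); last lia.
by apply/eqP; case: e2.
Qed.
Lemma Gr_packing : has_tree_packing (Gr s k t) k t.
Proof.
exists (fun c : 'I_t => PS (Gr s k t) k (pc c)), (fun c : 'I_t => PE (Gr s k t) k (pc c)).
split; first by move=> c; apply: pc_tree.
move=> c d cd; rewrite disjoint_subset; apply/subsetP => x.
rewrite !inE !inPS => /existsP[i /eqP ->]; apply/negP => /existsP[j /eqP].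
rewrite /pc => /(congr1 val).
rewrite !val_insubd (pv_lt _ _ (ltn_ord c) (ltn_ord i)) (pv_lt _ _ (ltn_ord d) (ltn_ord j)).
move/(pv_eq _ _ _ _ (ltn_ord c) (ltn_ord d) (ltn_ord i) (ltn_ord j)) => /val_inj e.
by rewrite e eqxx in cd.
Qed.
End Pack.

Lemma nvN s k t (u : 'I_(vn (Gr s k t))) : @nat_of_ord (vn (Gr s k t)) u = @nat_of_ord (N s k t) u.
Proof. by []. Qed.

Section Upper.
Variables s k t : nat.
Hypotheses (hs : 3 <= s) (hk : 2 <= k) (ht : 1 <= t).

Lemma tree_center S E : tree_subgraph (Gr s k t) k S E -> exists2 x, x \in S & (x : nat) < t.
Proof.
case=> [[Esym Eadj] [Sne Sconn Sbr Sn]].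
case: (boolP [exists x in S, (x : nat) < t]) => [/existsP[x /andP[xS xt]]|/existsPn H]; first by exists x.
exfalso.
have kp : 0 < k by lia.
have St : forall x, x \in S -> t <= x.
  by move=> x xS; have := H x; rewrite xS /= -leqNgt.
case/set0Pn: Sne => x0 x0S.
pose b0 := ((x0 : nat) - t) %/ k.
have blk : forall u v, E u v -> ((u : nat) - t) %/ k = ((v : nat) - t) %/ k /\ ((u : nat).+1 = v \/ (v : nat).+1 = u).
  move=> u v /Eadj /and3P[/adjnE huv uS vS].
  case: huv => [[_ [_ [h1 h2]]]|[[h _]|[h _]]]; first by split.
  - by exfalso; have := St _ uS; have := nvN s k t u; move: h; clear; lia.
  - by exfalso; have := St _ vS; have := nvN s k t v; move: h; clear; lia.
have clA : closed E [pred v : 'I_(vn (Gr s k t)) | ((v : nat) - t) %/ k == b0].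
  by move=> u v /blk [e _]; rewrite !inE /= e.
have inb : forall u, u \in S -> ((u : nat) - t) %/ k = b0.
  move=> u uS; have := closed_connect clA (Sconn _ _ x0S uS).
  by rewrite !inE /= eqxx => /esym/eqP.
pose f (i : 'I_k.-1) := (insubd x0 (t + b0 * k + i), insubd x0 (t + b0 * k + i.+1)).
have sub : [set q : 'I_(vn (Gr s k t)) * 'I_(vn (Gr s k t)) | E q.1 q.2 && (q.1 < q.2)] \subset f @: 'I_k.-1.
  apply/subsetP => -[u v]; rewrite inE /= => /andP[Euv uv].
  have [e1 e2] := blk _ _ Euv.
  have vu : (v : nat) = (u : nat).+1 by have := nvN s k t u; have := nvN s k t v; case: e2; lia.
  have uS : u \in S by case/and3P: (Eadj _ _ Euv).
  have bu := inb _ uS.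
  pose i := ((u : nat) - t) %% k.
  have ui : (u : nat) = t + b0 * k + i.
    have := divn_eq ((u : nat) - t) k; rewrite bu -/i; have := St _ uS.
    generalize (b0 * k) => X; lia.
  have ilt : i < k by apply: ltn_pmod.
  have ik : i < k.-1.
    case: (ltnP i.+1 k) => [|ki]; first by lia.
    have ieq : i.+1 = k by lia.
    have : ((v : nat) - t) %/ k = b0.+1.
      by rewrite vu ui -addnS ieq -addnA addnC addnK -mulSnr mulnK.
    by rewrite -e1 bu; lia.
  apply/imsetP; exists (Ordinal ik) => //; rewrite /f /=.
  have vi : (v : nat) = t + b0 * k + i.+1 by rewrite vu ui addnS.
  by rewrite -ui -vi !insubd_val.
have := subset_leq_card sub; rewrite /nedges in Sn; rewrite Sn.
move/leq_trans => /(_ _ (leq_imset_card _ _)); rewrite card_ord; lia.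
Qed.

Lemma Gr_upper t' : has_tree_packing (Gr s k t) k t' -> t' <= t.
Proof.
case=> S [E [HT Hdis]].
pose d0 : 'I_(N s k t) := Ordinal (@ltN s k t 0 ht).
pose h (i : 'I_t') : 'I_t := insubd (Ordinal ht) ((odflt d0 [pick x | (x \in S i) && ((x : nat) < t)]) : nat).
have hP : forall i, exists2 x, [pick x | (x \in S i) && ((x : nat) < t)] = Some x & (x \in S i) && ((x : nat) < t).
  move=> i; case: pickP => [x hx|none]; first by exists x.
  have [x xS xt] := tree_center _ _ (HT i); by have := none x; rewrite xS xt.
have hinj : injective h.
  move=> i j; rewrite /h; have [x -> /andP[xS xt]] := hP i; have [y -> /andP[yS yt]] := hP j => /=.
  move/(congr1 val); rewrite /= !vtxP // => /val_inj exy.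
  apply/eqP; apply: contraT => ij; have := Hdis _ _ ij; rewrite disjoint_subset => /subsetP/(_ x xS).
  by rewrite inE exy yS.
by have := leq_card h hinj; rewrite !card_ord.
Qed.
End Upper.

From mathcomp Require Import ring.
Lemma N_mono s k a b : 0 < k -> a < b -> N s k a < N s k b.
Proof.
move=> kp ab; rewrite /N; apply: (@leq_ltn_trans (a + k * (b * (s-1)).+1)).
  by rewrite leq_add2l leq_mul2l ltnS leq_mul2r (ltnW ab) !orbT.
by rewrite ltn_add2r.
Qed.

Local Open Scope ring_scope.

Theorem theorem1p10 (s k : nat) :
  (3 <= s)%N -> (2 <= k)%N ->
  exists Gs : nat -> sgraph,
    (forall i j : nat, i <> j -> ~ isomorphic (Gs i) (Gs j)) /\
    (forall i : nat,
       connectedG (Gs i) /\ in_class 1 s (Gs i) /\ vn (Gs i) <> k /\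
       exists t : nat, is_tau (Gs i) k t /\
         ((s * k - k + 1)%N%:Z * t%:Z = (vn (Gs i))%:Z - k%:Z :> int)).
Proof.
move=> hs hk.
have kp : (0 < k)%N by lia.
exists (fun i => Gr s k i.+1); split.
  move=> i j ij [f [fb _]]; apply: ij.
  have := bij_eq_card fb; rewrite !card_ord /= => e.
  case: (ltngtP i j) => // h.
    by have := @N_mono s k _ _ kp (h : (i.+1 < j.+1)%N); rewrite e ltnn.
  by have := @N_mono s k _ _ kp (h : (j.+1 < i.+1)%N); rewrite e ltnn.
move=> i; split; first exact: Gr_connected.
split.
  by move=> x; rewrite (@deg_lower s k i.+1 hs hk) ?(@deg_upper s k i.+1 hs hk).
have eN : N s k i.+1 = (k + (s * k - k + 1) * i.+1)%N.
  have e1 : (s * k - k = (s - 1) * k)%N by rewrite mulnBl mul1n.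
  rewrite /N e1; generalize (s - 1)%N => S'; ring.
split; first by rewrite /= eN => /(f_equal (fun m => (m - k)%N)); rewrite addKn subnn => /eqP; rewrite muln_eq0 addn1.
exists i.+1; split.
  by split; [exact: Gr_packing | exact: Gr_upper].
rewrite /= eN; generalize (s * k - k + 1)%N => X; lia.
Qed.
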